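(* Let $k,r,p>0$ be integers and let $F:\mathbb{N}^k\to\mathbb{N}^r$ be any function. Then there exists $E\subseteq\mathbb{N}$ with $|E|=p$ such that $F$ has at most $k^k\,p$ regressive values on $E^k$.
   Context: $\mathbb{N}=\{0,1,2,\dots\}$. For $x\in\mathbb{N}^k$, $\min(x)$ is the minimum coordinate and $|x|$ the maximum coordinate of $x$. For $B\subseteq\mathbb{N}^k$ and a function $F$ defined on $B$ with values in $\mathbb{N}^r$, an element $y$ is a regressive value of $F$ on $B$ iff there exists $x\in B$ with $F(x)=y$ and $|y|<\min(x)$. *)

(* Defs.v *)
From mathcomp Require Import all_boot.
Set Implicit Arguments. Unset Strict Implicit. Unset Printing Implicit Defensive.

(* max coordinate |x| (0 for the empty tuple) *)
Definition tmax (s : seq nat) : nat := foldr maxn 0 s.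
(* min coordinate min(x); for a nonempty sequence this is its least entry *)
Definition tmin (s : seq nat) : nat := foldr minn (head 0 s) s.

Definition regressive_value (k r : nat) (F : k.-tuple nat -> r.-tuple nat)
  (E : seq nat) (y : r.-tuple nat) : Prop :=
  exists x : k.-tuple nat,
    all (fun i => i \in E) x /\ F x = y /\ tmax y < tmin x.

(* Main.v *)
Require Import Defs.
From Stdlib Require Import Classical ClassicalEpsilon.
From mathcomp Require Import all_boot.
Set Implicit Arguments. Unset Strict Implicit. Unset Printing Implicit Defensive.

Definition inf (P : nat -> Prop) := forall n, exists m, n <= m /\ P m.
Definition inS (H : nat -> Prop) (s : seq nat) := forall v, v \in s -> H v.

Lemma build (Q : (nat -> Prop) -> nat -> (nat -> Prop) -> Prop) (H : nat -> Prop) :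
  inf H ->
  (forall X, inf X -> exists a Y, inf Y /\ X a /\ (forall v, Y v -> X v /\ a < v) /\ Q X a Y) ->
  exists (a : nat -> nat) (S : nat -> nat -> Prop), S 0 = H /\
    forall i, inf (S i) /\ S i (a i) /\ (forall v, S i.+1 v -> S i v /\ a i < v) /\ Q (S i) (a i) (S i.+1).
Proof.
move=> hH hstep.
pose T := {P : nat -> Prop | inf P}.
have step : forall X : T, {p : nat * T | inf (sval p.2) /\ sval X p.1 /\
    (forall v, sval p.2 v -> sval X v /\ p.1 < v) /\ Q (sval X) p.1 (sval p.2)}.
  move=> X; apply: constructive_indefinite_description.
  have [a [Y [hY [Xa [hYX hQ]]]]] := hstep (sval X) (svalP X).
  by exists (a, exist _ Y hY).
pose st i := iter i (fun X => (sval (step X)).2) (exist _ H hH : T).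
exists (fun i => (sval (step (st i))).1), (fun i => sval (st i)); split => // i.
have := svalP (step (st i)).
case=> h1 [h2 [h3 h4]]; split; first exact: svalP.
by split.
Qed.

Section Build.
Variables (a : nat -> nat) (S : nat -> nat -> Prop).
Hypothesis hS : forall i, S i (a i) /\ (forall v, S i.+1 v -> S i v /\ a i < v).
Lemma S_dec i j v : i <= j -> S j v -> S i v.
Proof.
elim: j => [|j IH]; first by rewrite leqn0 => /eqP ->.
rewrite leq_eqVlt => /orP [/eqP -> //| hij] hv.
apply: IH => //; exact: (proj1 ((proj2 (hS j)) v hv)).
Qed.
Lemma a_lt i j : i < j -> a i < a j.
Proof.
move=> hij; have h := S_dec hij (proj1 (hS j)).
exact: (proj2 ((proj2 (hS i)) _ h)).
Qed.
Lemma a_ge i : i <= a i.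
Proof. elim: i => // i IH; exact: leq_ltn_trans IH (a_lt (ltnSn i)). Qed.
Lemma a_after i j : a i < a j -> S i.+1 (a j).
Proof.
move=> h; case: (ltnP i j) => [hij|hji]; first exact: S_dec hij (proj1 (hS j)).
move: hji; rewrite leq_eqVlt => /orP [/eqP e|hji]; first by move: h; rewrite e ltnn.
by have := a_lt hji; rewrite ltnNge ltnW.
Qed.
End Build.

Lemma pigeon (T : eqType) (L : seq T) (f : nat -> T) : (forall i, f i \in L) ->
  exists b, b \in L /\ forall N, exists i, N <= i /\ f i = b.
Proof.
elim: L f => [|x L IH] f hf; first by have := hf 0.
case: (classic (forall N, exists i, N <= i /\ f i = x)) => [h|h].
  by exists x; rewrite mem_head.
have [N hN] : exists N, forall i, N <= i -> f i <> x.
  apply: NNPP => hc; apply: h => N; apply: NNPP => hc2; apply: hc; exists N => i hi e.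
  by apply: hc2; exists i.
have hf' : forall i, f (i + N) \in L.
  move=> i; have := hf (i + N); rewrite in_cons => /orP [/eqP e|//].
  by exfalso; apply: (hN (i + N)) => //; rewrite leq_addl.
have [b [hb hinf]] := IH _ hf'.
exists b; split; first by rewrite in_cons hb orbT.
move=> M; have [i [hi e]] := hinf M; exists (i + N); split => //.
exact: leq_trans hi (leq_addr _ _).
Qed.

Lemma ramsey (T : eqType) (L : seq T) n : forall (c : seq nat -> T), (forall s, c s \in L) ->
  forall H, inf H -> exists H', inf H' /\ (forall v, H' v -> H v) /\
   exists b, b \in L /\ forall s, size s = n -> sorted ltn s -> inS H' s -> c s = b.
Proof.
elim: n => [|n IH] c hc H hH.
  exists H; split=> //; split=> //; exists (c [::]); split=> // s /size0nil -> //.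
pose Q (X : nat -> Prop) a Y := exists b, b \in L /\
  forall t, size t = n -> sorted ltn t -> inS Y t -> c (a :: t) = b.
have hstep : forall X, inf X -> exists a Y, inf Y /\ X a /\ (forall v, Y v -> X v /\ a < v) /\ Q X a Y.
  move=> X hX.
have [a [_ Xa]] := hX 0.
pose Y0 := fun v => X v /\ a < v.
have hY0 : inf Y0.
  move=> m; have [w [hw Xw]] := hX (maxn m a.+1).
  by exists w; move: hw; rewrite geq_max => /andP [h1 h2].
have [Y [hY [hYY0 [b [hb hhom]]]]] := IH (fun t => c (a :: t)) (fun t => hc _) Y0 hY0.
exists a, Y; split => //; split => //; split; first by move=> v /hYY0.
by exists b.
have [a [S [S0 hS]]] := build hH hstep.
  have hS' i := conj (proj1 (proj2 (hS i))) (proj1 (proj2 (proj2 (hS i)))).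

  have hQ i := proj2 (proj2 (proj2 (hS i))).
  pose bf i := sval (constructive_indefinite_description _ (hQ i)).
  have hbf i := svalP (constructive_indefinite_description _ (hQ i)).
  have [b [hb hinf]] := pigeon (f := bf) (fun i => proj1 (hbf i)).
  exists (fun v => exists i, v = a i /\ bf i = b); split.
    move=> N; have [i [hi e]] := hinf N; exists (a i); split; last by exists i.
    exact: leq_trans hi (a_ge hS' i).
  split.
    move=> v [i [-> _]]; rewrite -S0; apply: (S_dec hS' (i:=0) (j:=i)) => //; exact: (proj1 (hS' i)).
  exists b; split => // -[|v t] //= [hs] hp hin.
  have [i [ev eb]] := hin v (mem_head _ _).
  rewrite -eb ev; apply: (proj2 (hbf i)) => //; first exact: path_sorted hp.
  move=> w hw; have [j [ew _]] := hin w ltac:(by rewrite in_cons hw orbT).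
  have := allP (order_path_min ltn_trans hp) w hw.
  rewrite ev ew => /(a_after hS'); by [].
Qed.

Lemma tmax_ge s v : v \in s -> v <= tmax s.
Proof.
elim: s => // h t IH; rewrite in_cons /tmax /= => /orP [/eqP ->| /IH h'];
  [exact: leq_maxl | exact: leq_trans h' (leq_maxr _ _)].
Qed.

Fixpoint allseqs (r a : nat) : seq (seq nat) :=
  if r is r'.+1 then [seq i :: t | i <- iota 0 a, t <- allseqs r' a] else [:: [::]].

Lemma size_allseqs r a : size (allseqs r a) = a ^ r.
Proof. elim: r => //= r IH; by rewrite size_allpairs size_iota IH expnS. Qed.

Lemma mem_allseqs r a w : size w = r -> (forall v, v \in w -> v < a) -> w \in allseqs r a.
Proof.
elim: r w => [|r IH] [|h t] //= e hw.
apply: allpairs_f; first by rewrite mem_iota add0n hw ?mem_head.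
apply: IH; first by case: e.
by move=> v hv; apply: hw; rewrite in_cons hv orbT.
Qed.

Definition hom m (g : seq nat -> seq nat) (H : nat -> Prop) :=
  forall s s', size s = m -> size s' = m -> sorted ltn s -> sorted ltn s' -> inS H s -> inS H s' ->
   head 0 s = head 0 s' -> tmax (g s) < head 0 s -> g s = g s'.

Lemma hom0 g H : hom 0 g H.
Proof. by move=> [|? ?] [|? ?]. Qed.

Lemma hom_mono m g H H' : (forall v, H' v -> H v) -> hom m g H -> hom m g H'.
Proof.
move=> hs h s s' h1 h2 h3 h4 h5 h6; apply: h => // v hv; apply: hs; [exact: h5|exact: h6].
Qed.

Lemma MH r n (f : seq nat -> seq nat) : (forall s, size (f s) = r) ->
  forall H, inf H -> exists H', inf H' /\ (forall v, H' v -> H v) /\ hom n.+1 f H'.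
Proof.
move=> hf H hH.
pose c a t := if tmax (f (a :: t)) < a then Some (f (a :: t)) else None.
pose Q (X : nat -> Prop) a Y := exists b : option (seq nat),
  forall t, size t = n -> sorted ltn t -> inS Y t -> c a t = b.
have hstep : forall X, inf X -> exists a Y, inf Y /\ X a /\ (forall v, Y v -> X v /\ a < v) /\ Q X a Y.
  move=> X hX; have [a [_ Xa]] := hX 0.
  pose Y0 := fun v => X v /\ a < v.
  have hY0 : inf Y0.
    move=> m; have [w [hw Xw]] := hX (maxn m a.+1).
    by exists w; move: hw; rewrite geq_max => /andP [h1 h2].
  have hc : forall t, c a t \in None :: map Some (allseqs r a).
    move=> t; rewrite /c; case: ifP => h; last by rewrite mem_head.
    rewrite in_cons /=; apply: map_f; apply: mem_allseqs => // v hv.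
    exact: leq_ltn_trans (tmax_ge hv) h.
  have [Y [hY [hYY0 [b [_ hb]]]]] := ramsey n hc hY0.
  exists a, Y; split => //; split => //; split; first by move=> v /hYY0.
  by exists b.
have [a [S [S0 hS]]] := build hH hstep.
have hS' i := conj (proj1 (proj2 (hS i))) (proj1 (proj2 (proj2 (hS i)))).
exists (fun v => exists i, v = a i); split.
  move=> N; exists (a N); split; [exact: a_ge hS' N| by exists N].
split.
  move=> v [i ->]; rewrite -S0; apply: (S_dec hS' (i:=0) (j:=i)) => //; exact: (proj1 (hS' i)).
move=> [|v t] [|v' t'] //= [hs] [hs'] hp hp' hin hin' ev hreg; subst v'.
have [i ev] := hin v (mem_head _ _); subst v.
have hT : forall t, path ltn (a i) t -> inS (fun v => exists i, v = a i) (a i :: t) -> inS (S i.+1) t.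
  move=> u hu hinu w hw; have [j ew] := hinu w ltac:(by rewrite in_cons hw orbT).
  have := allP (order_path_min ltn_trans hu) w hw.
  rewrite ew => /(a_after hS'); by [].
have [b hb] := proj2 (proj2 (proj2 (hS i))).
have e1 := hb t hs (path_sorted hp) (hT _ hp hin).
have e2 := hb t' hs' (path_sorted hp') (hT _ hp' hin').
move: e1 e2; rewrite /c hreg => <-; case: ifP => // _ [] //.
Qed.

Lemma MHall r (G : nat * seq nat -> seq nat -> seq nat) : (forall q s, size (G q s) = r) ->
  forall (l : seq (nat * seq nat)) (H : nat -> Prop), inf H -> exists H', inf H' /\ (forall v, H' v -> H v) /\
    forall q, q \in l -> hom q.1 (G q) H'.
Proof.
move=> hG; elim=> [|q l IH] H hH; first by exists H.
have [H1 [h1 [s1 hom1]]] := IH H hH.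
have [H2 [h2 [s2 hom2]]] : exists H2, inf H2 /\ (forall v, H2 v -> H1 v) /\ hom q.1 (G q) H2.
  case: q => [m rho] /=; case: m => [|n].
    by exists H1; split=> //; split=> //; exact: hom0.
  exact: (MH n (hG (n.+1, rho)) h1).
exists H2; split => //; split; first by move=> v /s2 /s1.
move=> q'; rewrite in_cons => /orP [/eqP -> //| hq].
exact: hom_mono s2 (hom1 _ hq).
Qed.

Lemma pickE p H : inf H -> exists E : seq nat, uniq E /\ size E = p /\ inS H E.
Proof.
move=> hH; elim: p => [|p [E [hu [hs hE]]]]; first by exists [::].
have [m [hm Hm]] := hH (tmax E).+1.
exists (m :: E); split.
  by rewrite /= hu andbT; apply/negP => /tmax_ge; rewrite leqNgt hm.
split; first by rewrite /= hs.
by move=> v; rewrite in_cons => /orP [/eqP -> // | /hE].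
Qed.

Lemma fmin_mem d s : foldr minn d s \in d :: s.
Proof.
elim: s => [|h t IH] /=; first by rewrite mem_head.
rewrite /minn; case: ifP => _; first by rewrite !in_cons eqxx orbT.
by move: IH; rewrite !in_cons => /orP [->|->]; rewrite ?orbT.
Qed.

Lemma fmin_le d s v : v \in s -> foldr minn d s <= v.
Proof.
elim: s => // h t IH; rewrite in_cons => /orP [/eqP ->|/IH h'];
  by rewrite /= geq_min ?leqnn // h' orbT.
Qed.

Lemma tmin_mem x : 0 < size x -> tmin x \in x.
Proof.
case: x => // h t _; have := fmin_mem h (h :: t).
by rewrite /tmin /= in_cons => /orP [/eqP ->|]; rewrite ?mem_head.
Qed.

Lemma tmin_le x v : v \in x -> tmin x <= v.
Proof. exact: fmin_le. Qed.

Lemma head_tmin x u : 0 < size x -> sorted ltn u -> u =i x -> head 0 u = tmin x.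
Proof.
move=> hx hs hu; have m := tmin_mem hx; rewrite -hu in m.
case: u hs hu m => // h t hs hu m /=.
apply/eqP; rewrite eqn_leq; apply/andP; split.
  move: m; rewrite in_cons => /orP [/eqP -> //| m].
  exact: ltnW (allP (order_path_min ltn_trans hs) _ m).
by apply: tmin_le; rewrite -hu mem_head.
Qed.

Lemma ux_props (x : seq nat) : 0 < size x ->
  let u := sort leq (undup x) in let rho := [seq index v u | v <- x] in
  [/\ sorted ltn u, u =i x, [seq nth 0 u i | i <- rho] = x, head 0 u = tmin x
      & [/\ size u = size (undup rho), size u <= size x & forall i, i \in rho -> i < size u]].
Proof.
move=> hx u rho.
have hmem : u =i x by move=> v; rewrite mem_sort mem_undup.
have huniq : uniq u by rewrite sort_uniq undup_uniq.
have hs : sorted ltn u.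
  by rewrite ltn_sorted_uniq_leq huniq sort_sorted //; exact: leq_total.
split => //; last split.
- rewrite -map_comp -[RHS]map_id; apply/eq_in_map => v hv /=.
  by rewrite nth_index // hmem.
- exact: head_tmin.
- have hu2 : uniq [seq index v u | v <- u].
    rewrite map_inj_in_uniq // => a b ha hb e.
    by rewrite -(nth_index 0 ha) e nth_index.
  rewrite -(size_map (fun v => index v u) u); apply: perm_size.
  apply: uniq_perm => //; first exact: undup_uniq.
  by move=> i; rewrite mem_undup; apply: eq_mem_map => v; rewrite hmem.
- by rewrite size_sort size_undup.
- by move=> i /mapP [v hv ->]; rewrite index_mem hmem.
Qed.

Theorem theorem0p2 (k r p : nat) (hk : 0 < k) (hr : 0 < r) (hp : 0 < p)
  (F : k.-tuple nat -> r.-tuple nat) :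
  exists E : seq nat, uniq E /\ size E = p /\
    forall s : seq (r.-tuple nat), uniq s ->
      (forall y, y \in s -> regressive_value F E y) ->
      size s <= k ^ k * p.
Proof.
pose u (x : seq nat) := sort leq (undup x).
pose rk (x : seq nat) := [seq index v (u x) | v <- x].
pose t0 := nseq_tuple k 0.
pose tup (w : seq nat) : k.-tuple nat := insubd t0 w.
have tupK : forall x : k.-tuple nat, tup (val x) = x.
  by move=> x; apply: val_inj; rewrite /tup insubdK //; exact/eqP/size_tuple.
pose G (q : nat * seq nat) (s : seq nat) : seq nat := val (F (tup [seq nth 0 s i | i <- q.2])).
have hG : forall q s, size (G q s) = r by move=> q s; rewrite size_tuple.
pose l := [seq (m, rho) | m <- iota 0 k.+1, rho <- allseqs k k].
have hN : inf (fun _ => True) by move=> n; exists n.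
have [H [hH [_ hhom]]] := MHall hG l hN.
have [E [hu [hs hE]]] := pickE p hH.
exists E; split => //; split => // s us hreg.
pose P y := regressive_value F E y.
have wit : forall y, {x : k.-tuple nat | P y ->
    all (fun i => i \in E) x /\ F x = y /\ tmax y < tmin x}.
  move=> y; case: (excluded_middle_informative (P y)) => h.
    have [x hx] := constructive_indefinite_description _ h.
    by exists x.
  by exists t0.
pose w y := sval (wit y).
pose g y := (tmin (w y), rk (w y)).
pose L := [seq (e, rho) | e <- E, rho <- allseqs k k].
have sL : size L = k ^ k * p by rewrite size_allpairs size_allseqs hs mulnC.
have hsx : forall x : k.-tuple nat, 0 < size x by move=> x; rewrite size_tuple.
have hrk : forall x : k.-tuple nat, rk x \in allseqs k k.
  move=> x; have [_ _ _ _ [_ h1 h2]] := ux_props (hsx x).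
  apply: mem_allseqs; first by rewrite size_map size_tuple.
  move=> v /h2 hv; exact: leq_trans hv (leq_trans h1 (eq_leq (size_tuple x))).
rewrite -sL -(size_map g); apply: uniq_leq_size.
  rewrite map_inj_in_uniq // => y y' hy hy' e.
  have [hxE [hFx hrx]] := svalP (wit y) (hreg y hy).
  have [hxE' [hFx' hrx']] := svalP (wit y') (hreg y' hy').
  rewrite -/(w y) in hxE hFx hrx; rewrite -/(w y') in hxE' hFx' hrx'.
  move: e; rewrite /g => -[etmin erk].
  set x := w y in hxE hFx hrx etmin erk; set x' := w y' in hxE' hFx' hrx' etmin erk.
  have [s1 m1 e1 h1 [z1 le1 _]] := ux_props (hsx x).
  have [s2 m2 e2 h2 [z2 _ _]] := ux_props (hsx x').
  rewrite -/(u x) -/(rk x) in s1 m1 e1 h1 z1 le1.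
  rewrite -/(u x') -/(rk x') -erk in s2 m2 e2 h2 z2.
  have hq : (size (u x), rk x) \in l.
    apply: allpairs_f; last exact: hrk.
    by rewrite mem_iota add0n ltnS (leq_trans le1 (eq_leq (size_tuple x))).
  have hGx : G (size (u x), rk x) (u x) = val y by rewrite /G /= e1 tupK hFx.
  have hGx' : G (size (u x), rk x) (u x') = val y' by rewrite /G /= e2 tupK hFx'.
  apply: val_inj; rewrite -hGx -hGx'.
  apply: (hhom _ hq) => //=.
  - by rewrite z2 -z1.
  - by move=> v; rewrite m1 => /(allP hxE) /hE.
  - by move=> v; rewrite m2 => /(allP hxE') /hE.
  - by rewrite h1 h2.
  - by rewrite hGx h1.
move=> q /mapP [y hy ->].
have [hxE [hFx hrx]] := svalP (wit y) (hreg y hy).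
apply: allpairs_f; last exact: hrk.
exact: (allP hxE) _ (tmin_mem (hsx _)).
Qed.
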